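(* Let $\alpha,\beta,\gamma\in\mathbb{R}$, $c,a\in\mathbb{R}$ with $ca>\max\{\gamma,0\}$, and $r>0$. Let $g(x,y)=c^2a^2-ca\gamma+ca\alpha x^2+3ca\beta y^2-\alpha^2x^2y^2$, $C=\{(x,y)\in\mathbb{R}^2:g(x,y)>0\}$, and $R=\{(x,y):x^2+y^2\le r^2\}$. Then $R\subseteq C$ in each of the following four cases: (1) $\alpha=0$ and $3\beta r^2>\gamma-ca$; (2) $\alpha\neq0$, $\alpha>3\beta$, $r^2\le\frac{ca\alpha-3ca\beta}{\alpha^2}$, and $3\beta r^2>\gamma-ca$; (3) $\alpha\neq0$, $\alpha<3\beta$, $r^2\le\frac{3ca\beta-ca\alpha}{\alpha^2}$, and $\alpha r^2>\gamma-ca$; (4) $3ca\alpha\beta+\alpha^2(ca-\gamma)>0$, $r^2\ge\max\Big\{\frac{ca\alpha-3ca\beta}{\alpha^2},\frac{3ca\beta-ca\alpha}{\alpha^2}\Big\}$, and $$\frac{ca\alpha+3ca\beta-2\sqrt{3c^2a^2\alpha\beta+\alpha^2ca(ca-\gamma)}}{\alpha^2}<r^2<\frac{ca\alpha+3ca\beta+2\sqrt{3c^2a^2\alpha\beta+\alpha^2ca(ca-\gamma)}}{\alpha^2}.$$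
   Context: The set $C$ is the contraction region (for $\omega^2=1$, identical couplings $a_j=b_j=a$) of the virtual system of the all-to-all coupled Rayleigh van der Pol network. *)

(* Defs.v *)
From Stdlib Require Import Reals.
Open Scope R_scope.

Definition g_fun (alpha beta gamma c a : R) (x y : R) : R :=
  c^2 * a^2 - c*a*gamma + c*a*alpha*x^2 + 3*c*a*beta*y^2 - alpha^2*x^2*y^2.

Definition C_set (alpha beta gamma c a : R) (p : R * R) : Prop :=
  g_fun alpha beta gamma c a (fst p) (snd p) > 0.

Definition R_disc (r : R) (p : R * R) : Prop :=
  (fst p)^2 + (snd p)^2 <= r^2.

(* Main.v *)
Require Import Defs.
From Stdlib Require Import Reals Lra Psatz.
Open Scope R_scope.

Lemma pow2_pos (x : R) : x <> 0 -> x^2 > 0.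
Proof. intro H. replace (x^2) with (x*x) by ring. destruct (Rlt_or_le x 0); [nra|].
 assert (x > 0) by lra. nra. Qed.

Lemma pos_of_mul (s X : R) : s > 0 -> s*X > 0 -> X > 0.
Proof. intros Hs H. apply (Rmult_lt_reg_l s); lra. Qed.

Lemma core (al be ga c a s : R) :
  c^2*a^2 - c*a*ga > 0 -> s > 0 ->
  (forall u, 0 <= u <= s ->
     c^2*a^2 - c*a*ga + c*a*al*u + 3*c*a*be*(s-u) - al^2*u*(s-u) > 0) ->
  forall x y, x^2 + y^2 <= s -> g_fun al be ga c a x y > 0.
Proof.
  intros HK Hs Hh x y Hxy. unfold g_fun.
  set (K := c^2*a^2 - c*a*ga) in *.
  set (A := c*a*al) in *. set (B := 3*c*a*be) in *.
  set (u := x^2) in *. set (v := y^2) in *.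
  assert (Hu : 0 <= u) by (unfold u; nra).
  assert (Hv : 0 <= v) by (unfold v; nra).
  assert (H0 := Hh 0 ltac:(lra)).
  assert (P1 : K + B*v > 0).
  { assert (s*(K+B*v) = (s-v)*K + v*(K + A*0 + B*(s-0) - al^2*0*(s-0))) by ring.
    assert (v <= s) by lra.
    assert (0 <= (s-v)*K) by (apply Rmult_le_pos; lra).
    assert (s*(K+B*v) > 0).
    { destruct (Req_dec v 0) as [Hz|Hn]; [rewrite Hz; nra|].
      assert (0 < v*(K + A*0 + B*(s-0) - al^2*0*(s-0))) by (apply Rmult_lt_0_compat; lra). lra. }
    destruct (Rle_or_lt (K+B*v) 0); [|lra].
    assert (s*(K+B*v) <= 0) by nra. lra. }
  set (w := s - v).
  destruct (Req_dec w 0) as [Hw|Hw].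
  - assert (u = 0) by (unfold w in Hw; lra). rewrite H. nra.
  - assert (Hwp : w > 0) by (unfold w in *; lra).
    assert (Hg := Hh w ltac:(unfold w; lra)).
    assert (Hv' : s - w = v) by (unfold w; ring). rewrite Hv' in Hg.
    assert (E : w*(K + A*u + B*v - al^2*u*v) = (w-u)*(K+B*v) + u*(K + A*w + B*v - al^2*w*v)) by ring.
    assert (u <= w) by (unfold w; lra).
    assert (0 <= (w-u)*(K+B*v)) by (apply Rmult_le_pos; lra).
    assert (w*(K + A*u + B*v - al^2*u*v) > 0).
    { rewrite E. destruct (Req_dec u 0) as [Hz|Hn].
      - rewrite Hz. assert (0 < (w-0)*(K+B*v)) by (apply Rmult_lt_0_compat; lra). lra.
      - assert (0 < u*(K + A*w + B*v - al^2*w*v)) by (apply Rmult_lt_0_compat; lra). lra. }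
    destruct (Rle_or_lt (K + A*u + B*v - al^2*u*v) 0); [|lra].
    assert (w*(K + A*u + B*v - al^2*u*v) <= 0) by nra. lra.
Qed.

Theorem lemma4p7 (alpha beta gamma c a r : R) :
  c * a > Rmax gamma 0 -> r > 0 ->
  ( (alpha = 0 /\ 3*beta*r^2 > gamma - c*a)
    \/ (alpha <> 0 /\ alpha > 3*beta /\
        r^2 <= (c*a*alpha - 3*c*a*beta) / alpha^2 /\ 3*beta*r^2 > gamma - c*a)
    \/ (alpha <> 0 /\ alpha < 3*beta /\
        r^2 <= (3*c*a*beta - c*a*alpha) / alpha^2 /\ alpha*r^2 > gamma - c*a)
    \/ (3*c*a*alpha*beta + alpha^2*(c*a - gamma) > 0 /\
        r^2 >= Rmax ((c*a*alpha - 3*c*a*beta) / alpha^2)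
                    ((3*c*a*beta - c*a*alpha) / alpha^2) /\
        (c*a*alpha + 3*c*a*beta
           - 2 * sqrt (3*c^2*a^2*alpha*beta + alpha^2*c*a*(c*a - gamma))) / alpha^2 < r^2 /\
        r^2 < (c*a*alpha + 3*c*a*beta
           + 2 * sqrt (3*c^2*a^2*alpha*beta + alpha^2*c*a*(c*a - gamma))) / alpha^2) ) ->
  forall p : R * R, R_disc r p -> C_set alpha beta gamma c a p.
Proof.
  intros Hca Hr Hcases [x y] Hp. unfold R_disc, C_set in *; cbn [fst snd] in *.
  assert (Hg : c*a > gamma) by (pose proof (Rmax_l gamma 0); lra).
  assert (Hp0 : c*a > 0) by (pose proof (Rmax_r gamma 0); lra).
  assert (HK : c^2*a^2 - c*a*gamma > 0).
  { replace (c^2*a^2 - c*a*gamma) with ((c*a)*(c*a-gamma)) by ring. apply Rmult_lt_0_compat; lra. }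
  assert (Hs : r^2 > 0) by nra.
  apply (core alpha beta gamma c a (r^2)); auto.
  intros u Hu.
  set (s := r^2) in *.
  destruct Hcases as [[H1 H2]|[[H1 [H2 [H3 H4]]]|[[H1 [H2 [H3 H4]]]|[H1 [_ [H3 H4]]]]]].
  - subst alpha.
    assert (HKB : c^2*a^2 - c*a*gamma + 3*c*a*beta*s > 0).
    { replace (c^2*a^2 - c*a*gamma + 3*c*a*beta*s) with ((c*a)*(c*a-gamma+3*beta*s)) by ring. apply Rmult_lt_0_compat; lra. }
    assert (E : s*(c^2*a^2 - c*a*gamma + c*a*0*u + 3*c*a*beta*(s-u) - 0^2*u*(s-u))
      = u*(c^2*a^2 - c*a*gamma) + (s-u)*(c^2*a^2 - c*a*gamma + 3*c*a*beta*s)) by ring.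
    apply (pos_of_mul s); [lra|]. rewrite E.
    assert (0 <= u*(c^2*a^2 - c*a*gamma)) by (apply Rmult_le_pos; lra).
    assert (0 <= (s-u)*(c^2*a^2 - c*a*gamma + 3*c*a*beta*s)) by (apply Rmult_le_pos; lra).
    destruct (Req_dec u 0) as [Hz|Hn].
    + rewrite Hz. assert (0 < (s-0)*(c^2*a^2 - c*a*gamma + 3*c*a*beta*s)) by (apply Rmult_lt_0_compat; lra). lra.
    + assert (0 < u*(c^2*a^2 - c*a*gamma)) by (apply Rmult_lt_0_compat; lra). lra.
  - assert (Hal : alpha^2 > 0) by (apply pow2_pos; exact H1).
    assert (Hb : alpha^2 * s <= c*a*alpha - 3*c*a*beta).
    { apply (Rmult_le_compat_l (alpha^2)) in H3; [|lra].
      field_simplify in H3; lra. }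
    assert (HKB : c^2*a^2 - c*a*gamma + 3*c*a*beta*s > 0).
    { replace (c^2*a^2 - c*a*gamma + 3*c*a*beta*s) with ((c*a)*(c*a-gamma+3*beta*s)) by ring. apply Rmult_lt_0_compat; lra. }
    assert (E : c^2*a^2 - c*a*gamma + c*a*alpha*u + 3*c*a*beta*(s-u) - alpha^2*u*(s-u)
      = (c^2*a^2 - c*a*gamma + 3*c*a*beta*s) + u*(c*a*alpha - 3*c*a*beta - alpha^2*s)
        + alpha^2*u^2) by ring.
    nra.
  - assert (Hal : alpha^2 > 0) by (apply pow2_pos; exact H1).
    assert (Hb : alpha^2 * s <= 3*c*a*beta - c*a*alpha).
    { apply (Rmult_le_compat_l (alpha^2)) in H3; [|lra].
      field_simplify in H3; lra. }
    assert (HKB : c^2*a^2 - c*a*gamma + c*a*alpha*s > 0).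
    { replace (c^2*a^2 - c*a*gamma + c*a*alpha*s) with ((c*a)*(c*a-gamma+alpha*s)) by ring. apply Rmult_lt_0_compat; lra. }
    assert (E : c^2*a^2 - c*a*gamma + c*a*alpha*u + 3*c*a*beta*(s-u) - alpha^2*u*(s-u)
      = (c^2*a^2 - c*a*gamma + c*a*alpha*s) + (u-s)*(c*a*alpha - 3*c*a*beta + alpha^2*s)
        + alpha^2*(u-s)^2) by ring.
    rewrite E.
    assert (0 <= (u-s)*(c*a*alpha - 3*c*a*beta + alpha^2*s)) by (replace ((u-s)*(c*a*alpha - 3*c*a*beta + alpha^2*s)) with ((s-u)*(-(c*a*alpha - 3*c*a*beta + alpha^2*s))) by ring; apply Rmult_le_pos; lra).
    assert (0 <= alpha^2*(u-s)^2) by (apply Rmult_le_pos; [lra| apply pow2_ge_0]).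
    lra.
  - assert (H1' : alpha <> 0).
    { intro Hz. subst alpha. lra. }
    assert (Hal : alpha^2 > 0) by (apply pow2_pos; exact H1').
    set (Q := 3*c^2*a^2*alpha*beta + alpha^2*c*a*(c*a - gamma)) in *.
    assert (HQ : Q > 0).
    { assert (Q = (c*a)*(3*c*a*alpha*beta + alpha^2*(c*a - gamma))) by (unfold Q; ring). nra. }
    set (S := sqrt Q) in *.
    assert (HS2 : S*S = Q) by (apply sqrt_sqrt; lra).
    assert (HS0 : 0 <= S) by apply sqrt_pos.
    assert (L1 : c*a*alpha + 3*c*a*beta - 2*S < alpha^2*s).
    { apply (Rmult_lt_compat_l (alpha^2)) in H3; [|lra].
      field_simplify in H3; lra. }
    assert (L2 : alpha^2*s < c*a*alpha + 3*c*a*beta + 2*S).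
    { apply (Rmult_lt_compat_l (alpha^2)) in H4; [|lra].
      field_simplify in H4; lra. }
    set (t := alpha^2*s - (c*a*alpha + 3*c*a*beta)) in *.
    assert (Ht : t*t < 4*Q).
    { assert (t*t < (2*S)*(2*S)) by (unfold t in *; nra). nra. }
    set (bb := c*a*alpha - 3*c*a*beta - alpha^2*s).
    assert (E : 4*alpha^2*(c^2*a^2 - c*a*gamma + c*a*alpha*u + 3*c*a*beta*(s-u) - alpha^2*u*(s-u))
      = (2*alpha^2*u + bb)^2 + (4*Q - t*t)) by (unfold bb, t, Q; ring).
    apply (pos_of_mul (4*alpha^2)); [lra|]. rewrite E.
    assert (0 <= (2*alpha^2*u + bb)^2) by apply pow2_ge_0. lra.
Qed.
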